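(* The only pair of natural numbers $(x,y)$ (with $0 \in \mathbb{N}$) such that $7^x-5^y$ is a perfect square is $(0,0)$.
   Context: Here $\mathbb{N}=\{0,1,2,\dots\}$, and a perfect square means $n^2$ for some $n\in\mathbb{N}$. *)

(* Defs.v *)
From Stdlib Require Import ZArith.
Open Scope Z_scope.

Definition is_perfect_square (z : Z) : Prop :=
  exists n : nat, z = (Z.of_nat n) ^ 2.

(* Main.v *)
Require Import Defs.
From Stdlib Require Import ZArith Lia.
Open Scope Z_scope.

Lemma pow_S : forall b n, b ^ Z.of_nat (S n) = b * b ^ Z.of_nat n.
Proof. intros. rewrite Nat2Z.inj_succ, Z.pow_succ_r by lia. ring. Qed.

Lemma pow_pos' : forall b n, 0 < b -> 0 < b ^ Z.of_nat n.
Proof. intros. apply Z.pow_pos_nonneg; lia. Qed.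

Lemma p5_63 : forall k, 
  5 ^ Z.of_nat k mod 63 = 1 \/ 5 ^ Z.of_nat k mod 63 = 5 \/ 5 ^ Z.of_nat k mod 63 = 25 \/ 5 ^ Z.of_nat k mod 63 = 62 \/ 5 ^ Z.of_nat k mod 63 = 58 \/ 5 ^ Z.of_nat k mod 63 = 38.
Proof.
  induction k. - vm_compute; lia.
  - rewrite pow_S, Z.mul_mod by lia.
    destruct IHk as [H|[H|[H|[H|[H|H]]]]]; rewrite H; vm_compute; lia.
Qed.

Lemma p7_63 : forall a,
  7 ^ Z.of_nat (S a) mod 63 = 7 \/ 7 ^ Z.of_nat (S a) mod 63 = 49 \/ 7 ^ Z.of_nat (S a) mod 63 = 28.
Proof.
  induction a. - vm_compute; lia.
  - rewrite pow_S, Z.mul_mod by lia.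
    destruct IHa as [H|[H|H]]; rewrite H; vm_compute; lia.
Qed.

Lemma p7_5 : forall a,
  7 ^ Z.of_nat a mod 5 = 1 \/ 7 ^ Z.of_nat a mod 5 = 2 \/ 7 ^ Z.of_nat a mod 5 = 3 \/ 7 ^ Z.of_nat a mod 5 = 4.
Proof.
  induction a. - vm_compute; lia.
  - rewrite pow_S, Z.mul_mod by lia.
    destruct IHa as [H|[H|[H|H]]]; rewrite H; vm_compute; lia.
Qed.

Lemma p5_4 : forall k, 5 ^ Z.of_nat k mod 4 = 1.
Proof.
  induction k. - reflexivity.
  - rewrite pow_S, Z.mul_mod, IHk by lia. reflexivity.
Qed.

Lemma p7_4 : forall n, (7 ^ Z.of_nat n mod 4 = 1 /\ Nat.even n = true)
  \/ (7 ^ Z.of_nat n mod 4 = 3 /\ Nat.even n = false).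
Proof.
  induction n. - left; split; reflexivity.
  - rewrite pow_S, Z.mul_mod by lia. rewrite Nat.even_succ, <- Nat.negb_even.
    destruct IHn as [[H1 H2]|[H1 H2]]; rewrite H1, H2; [right|left]; split; reflexivity.
Qed.

Lemma div5 : forall u v, (u * v) mod 5 = 0 -> u mod 5 = 0 \/ v mod 5 = 0.
Proof.
  intros u v H. rewrite Z.mul_mod in H by lia.
  pose proof (Z.mod_pos_bound u 5 ltac:(lia)) as U. pose proof (Z.mod_pos_bound v 5 ltac:(lia)) as V.
  assert (u mod 5 = 0 \/ u mod 5 = 1 \/ u mod 5 = 2 \/ u mod 5 = 3 \/ u mod 5 = 4) by lia.
  assert (v mod 5 = 0 \/ v mod 5 = 1 \/ v mod 5 = 2 \/ v mod 5 = 3 \/ v mod 5 = 4) by lia.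
  destruct H0 as [A|[A|[A|[A|A]]]]; destruct H1 as [B|[B|[B|[B|B]]]];
    rewrite ?A, ?B in H; vm_compute in H; lia.
Qed.

Lemma factor5 : forall n u v, 0 <= u -> 0 <= v -> u * v = 5 ^ Z.of_nat n ->
  exists i, u = 5 ^ Z.of_nat i.
Proof.
  induction n; intros u v Hu Hv H.
  - exists 0%nat. simpl in *. apply Z.eq_mul_1_nonneg in H; [lia|lia].
  - rewrite pow_S in H.
    assert (Hm : (u * v) mod 5 = 0) by (rewrite H, Z.mul_comm, Z.mod_mul; lia).
    destruct (div5 _ _ Hm) as [A|A].
    + assert (E : u = 5 * (u / 5)) by (apply Z.div_exact; lia).
      destruct (IHn (u/5) v) as [i Hi].
      * apply Z.div_pos; lia.
      * lia.
      * rewrite E in H. lia.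
      * exists (S i). rewrite pow_S, <- Hi. exact E.
    + assert (E : v = 5 * (v / 5)) by (apply Z.div_exact; lia).
      destruct (IHn u (v/5)) as [i Hi].
      * lia.
      * apply Z.div_pos; lia.
      * rewrite E in H. lia.
      * exists i. exact Hi.
Qed.

Lemma key : forall a k, 2 * 7 ^ Z.of_nat a = 1 + 5 ^ Z.of_nat k -> a = 0%nat /\ k = 0%nat.
Proof.
  intros a k H. destruct a as [|a].
  - change (7 ^ Z.of_nat 0) with 1 in H. destruct k as [|k]; [auto|].
    rewrite pow_S in H. pose proof (pow_pos' 5 k ltac:(lia)). generalize dependent (5 ^ Z.of_nat k). intros. lia.
  - exfalso. pose proof (p7_63 a) as A. pose proof (p5_63 k) as B.
    pose proof (Z_div_mod_eq_full (7 ^ Z.of_nat (S a)) 63).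
    pose proof (Z_div_mod_eq_full (5 ^ Z.of_nat k) 63).
    pose proof (Z_div_mod_eq_full (7 ^ Z.of_nat (S a)) 63).
    pose proof (Z_div_mod_eq_full (5 ^ Z.of_nat k) 63).
    generalize dependent (7 ^ Z.of_nat (S a)). generalize dependent (5 ^ Z.of_nat k).
    intros. lia.
Qed.

Theorem mainTheorem3 : forall x y : nat,
  is_perfect_square (7 ^ Z.of_nat x - 5 ^ Z.of_nat y) <-> (x = 0%nat /\ y = 0%nat).
Proof.
  intros x y. split.
  - intros [n Hn]. set (z := Z.of_nat n) in Hn.
    assert (Hz : 0 <= z) by (unfold z; lia).
    assert (Hz2 : z ^ 2 mod 4 = 0 \/ z ^ 2 mod 4 = 1).
    { rewrite Z.pow_2_r, Z.mul_mod by lia.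
      pose proof (Z.mod_pos_bound z 4 ltac:(lia)).
      assert (z mod 4 = 0 \/ z mod 4 = 1 \/ z mod 4 = 2 \/ z mod 4 = 3) by lia.
      destruct H0 as [A|[A|[A|A]]]; rewrite A; vm_compute; lia. }
    destruct (p7_4 x) as [[H1 H2]|[H1 H2]].
    2:{ exfalso. pose proof (p5_4 y).
        pose proof (Z_div_mod_eq_full (7 ^ Z.of_nat x) 4).
        pose proof (Z_div_mod_eq_full (5 ^ Z.of_nat y) 4).
        pose proof (Z_div_mod_eq_full (z ^ 2) 4).
        generalize dependent (7 ^ Z.of_nat x). generalize dependent (5 ^ Z.of_nat y).
        generalize dependent (z ^ 2). intros. lia. }
    apply Nat.even_spec in H2. destruct H2 as [a Ha]. subst x.
    rewrite Nat2Z.inj_mul, Z.mul_comm, Z.pow_mul_r in Hn by lia.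
    set (w := 7 ^ Z.of_nat a) in Hn.
    assert (Hw : 0 < w) by (apply pow_pos'; lia).
    pose proof (pow_pos' 5 y ltac:(lia)) as H5.
    assert (Hf : (w - z) * (w + z) = 5 ^ Z.of_nat y) by (rewrite Z.pow_2_r in Hn; nia).
    assert (Hwz : 0 <= w - z) by nia.
    destruct (factor5 y (w - z) (w + z) Hwz ltac:(lia) Hf) as [i Hi].
    destruct (factor5 y (w + z) (w - z) ltac:(lia) Hwz ltac:(rewrite <- Hf; ring)) as [j Hj].
    destruct i as [|i]; [|destruct j as [|j]].
    + change (5 ^ Z.of_nat 0) with 1 in Hi. destruct (key a j) as [-> ->]. { fold w. lia. }
      change (5 ^ Z.of_nat 0) with 1 in Hj. rewrite Hi, Hj in Hf. split; [reflexivity|].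
      destruct y as [|y]; [reflexivity|]. rewrite pow_S in Hf.
      pose proof (pow_pos' 5 y ltac:(lia)). lia.
    + change (5 ^ Z.of_nat 0) with 1 in Hj. destruct (key a (S i)) as [-> HH]; [fold w; lia|]. discriminate.
    + exfalso. rewrite pow_S in Hi, Hj. pose proof (p7_5 a) as A. fold w in A. pose proof (Z_div_mod_eq_full w 5).
      generalize dependent (5 ^ Z.of_nat i). generalize dependent (5 ^ Z.of_nat j).
      intros. lia.
  - intros [-> ->]. exists 0%nat. reflexivity.
Qed.
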